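(* Let $(\preceq_s)_{s\in S}$ be a finite family of WQOs on a set $X$ and let $\preceq$ be its conjunction ($x\preceq y$ iff $x\preceq_s y$ for all $s\in S$). Then $I\subseteq X$ is an ideal of $(X,\preceq)$ if and only if $I=\bigcap_{s\in S}I_s$, where each $I_s$ is an ideal of $(X,\preceq_s)$ and $(I_s)_{s\in S}\in\mathrm{Adh}_S(I)$.
   Context: An ideal of a WQO is a nonempty, downward closed, directed subset (directed: any two elements have a common upper bound in the set). For $L\subseteq X$, $\mathrm{Adh}_S(L)$ is the set of families $(I_s)_{s\in S}$ of ideals ($I_s$ an ideal of $\preceq_s$) for which there is a $\preceq$-directed set $D\subseteq L$ with $I_s=\downarrow_{\preceq_s}D$ for every $s\in S$. *)

(* Defs.v *)
From mathcomp Require Import all_boot.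
Set Implicit Arguments. Unset Strict Implicit. Unset Printing Implicit Defensive.

Definition wqo (X : Type) (R : X -> X -> Prop) : Prop :=
  (forall x, R x x) /\
  (forall x y z, R x y -> R y z -> R x z) /\
  (forall f : nat -> X, exists i j : nat, (i < j)%N /\ R (f i) (f j)).

Definition conj_rel (S X : Type) (le : S -> X -> X -> Prop) : X -> X -> Prop :=
  fun x y => forall s, le s x y.

Definition downward_closed (X : Type) (R : X -> X -> Prop) (A : X -> Prop) : Prop :=
  forall x y, A y -> R x y -> A x.

Definition directed (X : Type) (R : X -> X -> Prop) (D : X -> Prop) : Prop :=
  (exists x, D x) /\
  (forall x y, D x -> D y -> exists z, D z /\ R x z /\ R y z).

Definition ideal (X : Type) (R : X -> X -> Prop) (I : X -> Prop) : Prop :=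
  (exists x, I x) /\ downward_closed R I /\ directed R I.

Definition down (X : Type) (R : X -> X -> Prop) (D : X -> Prop) : X -> Prop :=
  fun x => exists y, D y /\ R x y.

Definition Adh (S X : Type) (le : S -> X -> X -> Prop) (L : X -> Prop)
    (Is : S -> X -> Prop) : Prop :=
  (forall s, ideal (le s) (Is s)) /\
  exists D : X -> Prop,
    directed (conj_rel le) D /\ (forall x, D x -> L x) /\
    (forall s x, Is s x <-> down (le s) D x).

(* Main.v *)
Require Import Defs.
From mathcomp Require Import all_boot.

Lemma dir_fin (S : finType) (X : Type) (le : S -> X -> X -> Prop)
  (D : X -> Prop) (Q : S -> X -> Prop) :
  directed (conj_rel le) D ->
  (forall s y z, Q s y -> conj_rel le y z -> Q s z) ->
  (forall s, exists y, D y /\ Q s y) ->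
  exists z, D z /\ forall s, Q s z.
Proof.
move=> [[x0 Dx0] Hd] Hup Hex.
have H : forall l : seq S, exists z, D z /\ forall s, s \in l -> Q s z.
  elim=> [|a l [z [Dz Hz]]]; first by exists x0; split.
  have [y [Dy Qy]] := Hex a.
  have [w [Dw [zw yw]]] := Hd z y Dz Dy.
  exists w; split=> // s; rewrite in_cons => /orP [/eqP -> | sl].
    exact: Hup Qy yw.
  exact: Hup (Hz s sl) zw.
have [z [Dz Hz]] := H (enum S).
by exists z; split=> // s; apply: Hz; rewrite mem_enum.
Qed.

Theorem mainTheorem10 (S : finType) (X : Type) (le : S -> X -> X -> Prop)
    (Hwqo : forall s, wqo (le s)) (I : X -> Prop) :
  ideal (conj_rel le) I <->
  exists Is : S -> X -> Prop,
    (forall s, ideal (le s) (Is s)) /\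
    Adh le I Is /\
    (forall x, I x <-> (forall s, Is s x)).
Proof.
have refl : forall s x, le s x x by move=> s; case: (Hwqo s).
have trans : forall s x y z, le s x y -> le s y z -> le s x z
  by move=> s; case: (Hwqo s) => _ [].
split.
- move=> [[x Ix] [Hdc Hdir]].
  have Hid : forall s, ideal (le s) (down (le s) I).
    move=> s; split; first by exists x, x; split => //; apply: refl.
    split.
      by move=> a b [c [Ic bc]] ab; exists c; split => //; apply: trans ab bc.
    split; first by exists x, x; split => //; apply: refl.
    move=> a b [c [Ic ac]] [d [Id bd]].
    have [e [Ie [ce de]]] := (proj2 Hdir) c d Ic Id.
    exists e; split; first by exists e; split => //; apply: refl.
    by split; [apply: trans ac (ce s) | apply: trans bd (de s)].
  exists (fun s => down (le s) I); split => //; split.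
    split => //; exists I; split => //; split => //.
  move=> y; split.
    by move=> Iy s; exists y; split => //; apply: refl.
  move=> H.
  have [z [Iz Hz]] := @dir_fin _ _ le _ (fun s z => le s y z) Hdir
     (fun s a b yb ab => trans s _ _ _ yb (ab s)) H.
  by apply: (Hdc y z Iz) => s; apply: Hz.
- move=> [Is [Hid [[_ [D [[[d0 Dd0] HdD] [DI HD]]]] HI]]].
  have IsD : forall s x, Is s x -> exists y, D y /\ le s x y
    by move=> s x /HD.
  split; first by exists d0; apply: DI.
  split.
    move=> a b Ib ab; apply (proj2 (HI a)) => s.
    have [_ [dc _]] := Hid s.
    by apply: (dc a b) (ab s); apply (proj1 (HI b)).
  split; first by exists d0; apply: DI.
  move=> a b Ia Ib.
  have Hex : forall s, exists y, D y /\ (le s a y /\ le s b y).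
    move=> s.
    have [y1 [Dy1 ay1]] := IsD s a (proj1 (HI a) Ia s).
    have [y2 [Dy2 by2]] := IsD s b (proj1 (HI b) Ib s).
    have [w [Dw [y1w y2w]]] := HdD y1 y2 Dy1 Dy2.
    by exists w; split => //; split; [apply: trans ay1 (y1w s) | apply: trans by2 (y2w s)].
  have [z [Dz Hz]] := @dir_fin _ _ le _ (fun s z => le s a z /\ le s b z)
    (conj (ex_intro _ d0 Dd0) HdD)
    (fun s u v H uv => conj (trans s _ _ _ (proj1 H) (uv s)) (trans s _ _ _ (proj2 H) (uv s))) Hex.
  by exists z; split; [apply: DI | split => s; case: (Hz s)].
Qed.
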